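(* Let $T$ be a locally finite simplicial tree with a fixed base vertex $x_0$, equipped with the metric $d$ described in the context, and let $\overline{T}=T\cup\partial T$ be its compactification by geodesic rays issuing from $x_0$, with the extended metric $d$ described in the context. Then $(\overline{T},d)$ is a $1$-transfer space. That is, $(\overline{T},d)$ is a compact contractible metric space, and for every $\delta>0$ there exist a simplicial complex $K$ of dimension at most $1$, continuous maps $i:\overline{T}\to K$ and $p:K\to\overline{T}$, and a homotopy $H:[0,1]\times\overline{T}\to\overline{T}$ from $p\circ i$ to $\mathrm{Id}_{\overline{T}}$ such that for every $x\in\overline{T}$, $\operatorname{diam}\{H(t,x)\mid t\in[0,1]\}\le\delta$.
   Context: A simplicial tree is a connected, simply connected simplicial complex of dimension $1$; locally finite means every vertex lies on finitely many edges. We work with its geometric realization. Fix a vertex $x_0$. For a vertex $v$ let $|v|$ be the minimal number of edges in an edge path from $x_0$ to $v$. Each edge joining a vertex $u$ with $|u|=n-1$ to a vertex $v$ with $|v|=n$ ($n\ge 1$) is given length $1/2^n$ (isometric to a Euclidean segment of that length), and $d$ on $T$ is the induced path (length) metric; $(T,d)$ is a uniquely geodesic metric space, and $d(x,x_0)<1$ for all $x\in T$. Write $d(x)=d(x,x_0)$ and define the Gromov product $(x|y)=\frac12(d(x)+d(y)-d(x,y))$; in $T$ this is the length of the common initial segment of the geodesics from $x_0$ to $x$ and to $y$. The boundary $\partial T$ is the set of geodesic rays in $T$ issuing from $x_0$, i.e. infinite sequences of vertices $x_0=v_0,v_1,v_2,\dots$ with $v_i,v_{i+1}$ adjacent and $|v_i|=i$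 (equivalently, equivalence classes of sequences $(x_i)$ in $T$ with $(x_i|x_j)\to 1$, where $(x_i)\sim(y_j)$ iff $\liminf_{i,j\to\infty}(x_i|y_j)=1$); each such ray has total length $\sum_{i\ge1}2^{-i}=1$. Set $\overline{T}=T\cup\partial T$. Each point $z\in\overline{T}$ determines a geodesic from $x_0$ (a finite segment of length $d(z)$ if $z\in T$, an infinite ray of length $d(z):=1$ if $z\in\partial T$); for $z,w\in\overline{T}$ let $(z|w)$ be the length of the common initial part of these two geodesics, and define $d(z,w)=d(z)+d(w)-2(z|w)$. In particular for $\chi,\chi'\in\partial T$, $d(\chi,\chi')=2(1-(\chi|\chi'))$ is the sum of the lengths of the two tails of the rays after their last common point, and $d(\chi,x_0)=1$. This extends the metric $d$ on $T$. *)

(* Defs.v *)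
From Stdlib Require Import Reals Lra List.
From Coquelicot Require Import Rbar Lub.
Open Scope R_scope.

Definition is_metric {X : Type} (d : X -> X -> R) : Prop :=
  (forall x y, 0 <= d x y) /\
  (forall x y, d x y = 0 <-> x = y) /\
  (forall x y, d x y = d y x) /\
  (forall x y z, d x z <= d x y + d y z).

Definition is_open {X : Type} (d : X -> X -> R) (U : X -> Prop) : Prop :=
  forall x, U x -> exists e, 0 < e /\ forall y, d x y < e -> U y.

Definition is_compact {X : Type} (d : X -> X -> R) : Prop :=
  forall (I : Type) (U : I -> X -> Prop),
    (forall i, is_open d (U i)) ->
    (forall x, exists i, U i x) ->
    exists l : list I, forall x, exists i, In i l /\ U i x.

Definition cont_on {X Y : Type} (dX : X -> X -> R) (A : X -> Prop)
    (dY : Y -> Y -> R) (f : X -> Y) : Prop :=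
  forall x, A x -> forall e, 0 < e ->
    exists del, 0 < del /\
      forall y, A y -> dX x y < del -> dY (f x) (f y) < e.

(* the product metric on [0,1] x X (max metric; induces the product topology) *)
Definition prod_dist {X : Type} (d : X -> X -> R) (p q : R * X) : R :=
  Rmax (Rabs (fst p - fst q)) (d (snd p) (snd q)).

Definition unit_interval_x {X : Type} (p : R * X) : Prop :=
  0 <= fst p <= 1.

Definition homotopy_cont {X Y : Type} (dX : X -> X -> R) (dY : Y -> Y -> R)
    (H : R -> X -> Y) : Prop :=
  cont_on (prod_dist dX) unit_interval_x dY (fun p => H (fst p) (snd p)).

Definition contractible {X : Type} (d : X -> X -> R) : Prop :=
  exists (c : X) (H : R -> X -> X),
    homotopy_cont d d H /\
    (forall x, H 0 x = x) /\ (forall x, H 1 x = c).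

Definition simplicial_complex_dim_le (n : nat) (simp : list nat -> Prop)
    (N : nat) : Prop :=
  (forall s, simp s ->
     s <> nil /\ NoDup s /\ (forall j, In j s -> (j < n)%nat) /\
     (length s <= S N)%nat) /\
  (forall s s', simp s -> s' <> nil -> NoDup s' -> incl s' s -> simp s') /\
  (forall j, (j < n)%nat -> simp (j :: nil)).

Definition sumR (l : list R) : R := fold_right Rplus 0 l.

(* points of |K| are given by barycentric coordinates b : nat -> R *)
Definition in_realization (n : nat) (simp : list nat -> Prop) (b : nat -> R)
    : Prop :=
  (forall j, 0 <= b j) /\
  (forall j, (n <= j)%nat -> b j = 0) /\
  sumR (map b (seq 0 n)) = 1 /\
  exists s, simp s /\ forall j, b j <> 0 -> In j s.

(* |K| with the subspace topology of R^n (l^1 distance) *)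
Definition real_dist (n : nat) (b b' : nat -> R) : R :=
  sumR (map (fun j => Rabs (b j - b' j)) (seq 0 n)).

Definition transfer_space {X : Type} (d : X -> X -> R) (N : nat) : Prop :=
  is_metric d /\ is_compact d /\ contractible d /\
  forall delta, 0 < delta ->
    exists (n : nat) (simp : list nat -> Prop),
      simplicial_complex_dim_le n simp N /\
      exists (i : X -> (nat -> R)) (p : (nat -> R) -> X) (H : R -> X -> X),
        (forall x, in_realization n simp (i x)) /\
        cont_on d (fun _ => True) (real_dist n) i /\
        cont_on (real_dist n) (in_realization n simp) d p /\
        homotopy_cont d d H /\
        (forall x, H 0 x = p (i x)) /\
        (forall x, H 1 x = x) /\
        (forall x s s', 0 <= s <= 1 -> 0 <= s' <= 1 ->
           d (H s x) (H s' x) <= delta).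

Definition walk {V : Type} (adj : V -> V -> Prop) (u v : V) (n : nat) : Prop :=
  exists f : nat -> V, f 0%nat = u /\ f n = v /\
    forall i, (i < n)%nat -> adj (f i) (f (S i)).

(* simplicial tree: 1-dim simplicial complex (simple graph), connected,
   simply connected (= no cycle) *)
Definition simplicial_tree {V : Type} (adj : V -> V -> Prop) : Prop :=
  (forall u v, adj u v -> adj v u) /\
  (forall v, ~ adj v v) /\
  (forall u v, exists n, walk adj u v n) /\
  ~ (exists (n : nat) (f : nat -> V),
       (3 <= n)%nat /\ f n = f 0%nat /\
       (forall i, (i < n)%nat -> adj (f i) (f (S i))) /\
       (forall i j, (i < n)%nat -> (j < n)%nat -> f i = f j -> i = j)).

Definition locally_finite {V : Type} (adj : V -> V -> Prop) : Prop :=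
  forall v, exists l : list V, forall w, adj v w -> In w l.

Definition level {V : Type} (adj : V -> V -> Prop) (x0 v : V) (n : nat) : Prop :=
  walk adj x0 v n /\ forall m, walk adj x0 v m -> (n <= m)%nat.

(* The compactification Tbar = T u dT.  A point z is encoded by its    *)
(* geodesic from x0: tt = d(z) in [0,1], and g i = the level-i vertex  *)
(* of that geodesic, defined exactly for i = 0 and for the levels i    *)
(* whose incoming edge (which starts at distance 1 - 2^-(i-1) from x0)  *)
(* is entered by the geodesic.  Edges to level n have length 2^-n.     *)
(* tt = 1 exactly for the boundary points (geodesic rays).             *)

Record Tbar {V : Type} (adj : V -> V -> Prop) (x0 : V) : Type := mkTbar {
  g : nat -> option V;
  tt : R;
  tt_range : 0 <= tt <= 1;
  g_0 : g 0%nat = Some x0;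
  g_def : forall i, (exists v, g (S i) = Some v) <-> 1 - (1/2)^i < tt;
  g_level : forall i v, g i = Some v -> level adj x0 v i;
  g_adj : forall i u v, g i = Some u -> g (S i) = Some v -> adj u v
}.
Arguments g {V adj x0}.
Arguments tt {V adj x0}.

Definition agree {V : Type} {adj : V -> V -> Prop} {x0 : V}
    (z w : Tbar adj x0) (k : nat) : Prop :=
  forall i, (i <= k)%nat -> g z i = g w i.

(* length of the common initial part of the geodesics of z and w:
   Gromov product (z|w) *)
Definition gromov {V : Type} {adj : V -> V -> Prop} {x0 : V}
    (z w : Tbar adj x0) : R :=
  Rmin (Rmin (tt z) (tt w))
       (real (Lub_Rbar (fun r => exists k, agree z w k /\ r = 1 - (1/2)^k))).

Definition Tbar_dist {V : Type} (adj : V -> V -> Prop) (x0 : V)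
    (z w : Tbar adj x0) : R :=
  tt z + tt w - 2 * gromov z w.

(* Main.v *)
Require Import Defs.
From Stdlib Require Import Reals Lra Lia List Arith Classical ClassicalEpsilon FunctionalExtensionality ProofIrrelevance.
From Coquelicot Require Import Rbar Lub.
Open Scope R_scope.

Lemma sumR_app l1 l2 : sumR (l1 ++ l2) = sumR l1 + sumR l2.
Proof. induction l1; simpl; [lra|rewrite IHl1; lra]. Qed.

Lemma sum_plus f h s len : sumR (map (fun k => f k + h k) (seq s len)) =
  sumR (map f (seq s len)) + sumR (map h (seq s len)).
Proof. revert s; induction len; intros s; simpl; [lra|rewrite IHlen; lra]. Qed.

Lemma sum_ext f h s len : (forall k, (s <= k < s + len)%nat -> f k = h k) ->
  sumR (map f (seq s len)) = sumR (map h (seq s len)).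
Proof.
  revert s; induction len; intros s H; simpl; auto.
  rewrite H by lia. rewrite (IHlen (S s)); auto. intros; apply H; lia.
Qed.

Lemma sum_zero f s len : (forall k, (s <= k < s + len)%nat -> f k = 0) ->
  sumR (map f (seq s len)) = 0.
Proof.
  revert s; induction len; intros s H; simpl; auto.
  rewrite H by lia. rewrite (IHlen (S s)); [lra|]. intros; apply H; lia.
Qed.

Lemma sum_single f s len a : (forall k, k <> a -> f k = 0) -> (s <= a < s + len)%nat ->
  sumR (map f (seq s len)) = f a.
Proof.
  revert s; induction len; intros s H Ha; [lia|]. simpl.
  destruct (Nat.eq_dec s a) as [->|Hne].
  - rewrite sum_zero; [lra|]. intros k Hk; apply H; lia.
  - rewrite H by auto. rewrite (IHlen (S s)); auto; [lra|lia].
Qed.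

Lemma sum_two f s len a c : (forall k, k <> a -> k <> c -> f k = 0) -> a <> c ->
  (s <= a < s + len)%nat -> (s <= c < s + len)%nat ->
  sumR (map f (seq s len)) = f a + f c.
Proof.
  intros H Hac Ha Hc.
  rewrite (sum_ext f (fun k => (if Nat.eq_dec k a then f k else 0) + (if Nat.eq_dec k a then 0 else f k))).
  2:{ intros k _; destruct Nat.eq_dec; lra. }
  rewrite sum_plus. rewrite (sum_single _ s len a); auto.
  2:{ intros k Hk; destruct Nat.eq_dec; congruence. }
  rewrite (sum_single _ s len c); auto.
  - destruct (Nat.eq_dec a a); [|congruence]. destruct (Nat.eq_dec c a); [congruence|]. lra.
  - intros k Hk; destruct Nat.eq_dec; auto.
Qed.

Lemma sum_le f h s len : (forall k, (s <= k < s + len)%nat -> f k <= h k) ->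
  sumR (map f (seq s len)) <= sumR (map h (seq s len)).
Proof.
  revert s; induction len; intros s H; simpl; [lra|].
  pose proof (H s ltac:(lia)). pose proof (IHlen (S s) ltac:(intros; apply H; lia)). lra.
Qed.

Lemma sum_nonneg f s len : (forall k, 0 <= f k) -> 0 <= sumR (map f (seq s len)).
Proof.
  intros H. revert s; induction len; intros s; simpl; [lra|]. pose proof (H s); pose proof (IHlen (S s)); lra.
Qed.

Lemma sum_scal f c s len : sumR (map (fun k => f k * c) (seq s len)) = sumR (map f (seq s len)) * c.
Proof. revert s; induction len; intros s; simpl; [lra|rewrite IHlen; lra]. Qed.

Lemma sum_const_le f M s len : (forall k, f k <= M) -> sumR (map f (seq s len)) <= INR len * M.
Proof.
  intros H. revert s; induction len; intros s; [simpl; lra|]. rewrite S_INR. simpl.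
  pose proof (H s); pose proof (IHlen (S s)); lra.
Qed.

Lemma sum_abs_diff f h s len :
  Rabs (sumR (map f (seq s len)) - sumR (map h (seq s len))) <=
  sumR (map (fun k => Rabs (f k - h k)) (seq s len)).
Proof.
  revert s; induction len; intros s; simpl. { rewrite Rminus_0_r, Rabs_R0; lra. }
  pose proof (IHlen (S s)).
  pose proof (Rabs_triang (f s - h s) (sumR (map f (seq (S s) len)) - sumR (map h (seq (S s) len)))).
  replace (f s + sumR (map f (seq (S s) len)) - (h s + sumR (map h (seq (S s) len)))) with
    (f s - h s + (sumR (map f (seq (S s) len)) - sumR (map h (seq (S s) len)))) by ring.
  lra.
Qed.

Lemma term_le_sum f s len k : (forall j, 0 <= f j) -> (s <= k < s + len)%nat ->
  f k <= sumR (map f (seq s len)).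
Proof.
  intros H. revert s; induction len; intros s Hk; [lia|]. simpl.
  destruct (Nat.eq_dec s k) as [->|Hne].
  - pose proof (sum_nonneg f (S k) len H); lra.
  - pose proof (H s); pose proof (IHlen (S s) ltac:(lia)); lra.
Qed.

Lemma sum_pos_ex f s len : sumR (map f (seq s len)) <> 0 -> exists k, (s <= k < s + len)%nat /\ f k <> 0.
Proof.
  intros H. apply NNPP; intros Hn. apply H. apply sum_zero. intros k Hk.
  apply NNPP; intros Hf; apply Hn; eauto.
Qed.

Definition Rk (k : nat) : R := 1 - (1/2)^k.

Lemma hp_pos k : 0 < (1/2)^k.
Proof. apply pow_lt; lra. Qed.
Lemma hp_S k : (1/2)^(S k) = (1/2)^k / 2.
Proof. simpl; lra. Qed.
Lemma hp_le1 k : (1/2)^k <= 1.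
Proof. induction k; simpl; [lra|]. pose proof (hp_pos k); lra. Qed.
Lemma hp_lt a b : (a < b)%nat -> (1/2)^b < (1/2)^a.
Proof.
  intros H; induction H.
  - rewrite hp_S; pose proof (hp_pos a); lra.
  - rewrite hp_S; pose proof (hp_pos m); lra.
Qed.
Lemma Rk_lt a b : (a < b)%nat -> Rk a < Rk b.
Proof. intros H; unfold Rk; pose proof (hp_lt a b H); lra. Qed.
Lemma Rk_le a b : (a <= b)%nat -> Rk a <= Rk b.
Proof. intros H; destruct (Nat.eq_dec a b); [subst; lra|]. left; apply Rk_lt; lia. Qed.
Lemma Rk_lt_inv a b : Rk a < Rk b -> (a < b)%nat.
Proof. intros H. destruct (Nat.lt_ge_cases a b); auto. pose proof (Rk_le b a H0); lra. Qed.
Lemma Rk_le_inv a b : Rk a <= Rk b -> (a <= b)%nat.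
Proof. intros H. destruct (Nat.le_gt_cases a b); auto. pose proof (Rk_lt b a H0); lra. Qed.
Lemma Rk_0 : Rk 0 = 0.
Proof. unfold Rk; simpl; lra. Qed.
Lemma Rk_ge0 k : 0 <= Rk k.
Proof. unfold Rk; pose proof (hp_le1 k); lra. Qed.
Lemma Rk_lt1 k : Rk k < 1.
Proof. unfold Rk; pose proof (hp_pos k); lra. Qed.
Lemma Rk_S k : Rk (S k) = Rk k + (1/2)^(S k).
Proof. unfold Rk; rewrite hp_S; lra. Qed.
Lemma hp_small e : 0 < e -> exists k, (1/2)^k < e.
Proof.
  intros He. destruct (pow_lt_1_zero (1/2) ltac:(rewrite Rabs_pos_eq; lra) e He) as [N HN].
  exists N. specialize (HN N (le_n N)). rewrite Rabs_pos_eq in HN; auto. left; apply hp_pos.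
Qed.
Lemma Rk_big c : c < 1 -> exists k, c < Rk k.
Proof. intros Hc. destruct (hp_small (1 - c)) as [k Hk]; [lra|]. exists k; unfold Rk; lra. Qed.

Lemma first_step (P : nat -> Prop) N : ~ P 0%nat -> P N -> exists k, ~ P k /\ P (S k).
Proof.
  intros H0 HN. induction N. { contradiction. }
  destruct (classic (P N)) as [HP|HP]; [apply IHN; auto| exists N; auto].
Qed.


Lemma mul_np a b : a <= 0 -> 0 <= b -> a * b <= 0.
Proof. intros. assert (0 <= (-a) * b) by (apply Rmult_le_pos; lra). lra. Qed.

Definition lo (j : nat) : R := match j with O => -1 | S j' => Rk j' end.
Definition sl_l (j : nat) : R := match j with O => 1 | S j' => 2^(S j') end.
Definition sl_r (j : nat) : R := 2^(S j).
Definition hat (j : nat) (t : R) : R :=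
  Rmax 0 (Rmin ((t - lo j) * sl_l j) ((Rk (S j) - t) * sl_r j)).

Lemma two_half k : 2^k * (1/2)^k = 1.
Proof. rewrite <- Rpow_mult_distr. replace (2 * (1/2)) with 1 by lra. apply pow1. Qed.
Lemma Rk_diff k : Rk (S k) - Rk k = (1/2)^(S k).
Proof. rewrite Rk_S; lra. Qed.
Lemma lo_Rk j : (Rk j - lo j) * sl_l j = 1.
Proof. destruct j as [|j]. { simpl; rewrite Rk_0; lra. } change (lo (S j)) with (Rk j); change (sl_l (S j)) with (2^(S j)). rewrite Rk_diff, Rmult_comm. apply two_half. Qed.
Lemma sr_Rk j : (Rk (S j) - Rk j) * sl_r j = 1.
Proof. unfold sl_r; rewrite Rk_diff, Rmult_comm. apply two_half. Qed.
Lemma sl_l_pos j : 0 < sl_l j.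
Proof. destruct j as [|j]; [simpl; lra|change (sl_l (S j)) with (2^(S j)); apply pow_lt; lra]. Qed.
Lemma sl_r_pos j : 0 < sl_r j.
Proof. apply pow_lt; lra. Qed.
Lemma sl_l_S j : sl_l (S j) = sl_r j.
Proof. reflexivity. Qed.
Lemma lo_S j : lo (S j) = Rk j.
Proof. reflexivity. Qed.
Lemma lo_le j : lo j <= Rk j.
Proof. destruct j as [|j]; [simpl; pose proof (Rk_ge0 0); lra|change (lo (S j)) with (Rk j); apply Rk_le; lia]. Qed.

Lemma hat_nonneg j t : 0 <= hat j t.
Proof. apply Rmax_l. Qed.

Lemma hat_left j t : Rk j <= t <= Rk (S j) -> hat j t = (Rk (S j) - t) * sl_r j.
Proof.
  intros H. pose proof (lo_Rk j); pose proof (sr_Rk j); pose proof (sl_l_pos j); pose proof (sl_r_pos j).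
  assert (HA : (t - lo j) * sl_l j = 1 + (t - Rk j) * sl_l j) by lra.
  assert (HB : (Rk (S j) - t) * sl_r j = 1 - (t - Rk j) * sl_r j) by lra.
  assert (0 <= (t - Rk j) * sl_l j) by (apply Rmult_le_pos; lra).
  assert (0 <= (t - Rk j) * sl_r j) by (apply Rmult_le_pos; lra).
  assert (0 <= (Rk (S j) - t) * sl_r j) by (apply Rmult_le_pos; lra).
  unfold hat. rewrite Rmin_right by lra. rewrite Rmax_right by lra. reflexivity.
Qed.

Lemma hat_right j t : Rk j <= t <= Rk (S j) -> hat (S j) t = (t - Rk j) * sl_r j.
Proof.
  intros H. pose proof (sr_Rk (S j)); pose proof (sr_Rk j); pose proof (sl_r_pos j); pose proof (sl_r_pos (S j)).
  unfold hat. rewrite lo_S, sl_l_S.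
  assert (H5 : (Rk (S (S j)) - t) * sl_r (S j) = 1 + (Rk (S j) - t) * sl_r (S j)) by lra.
  assert (0 <= (Rk (S j) - t) * sl_r (S j)) by (apply Rmult_le_pos; lra).
  assert (0 <= (t - Rk j) * sl_r j) by (apply Rmult_le_pos; lra).
  assert ((t - Rk j) * sl_r j <= 1).
  { rewrite <- (sr_Rk j). apply Rmult_le_compat_r; lra. }
  rewrite Rmin_left by lra. rewrite Rmax_right by lra. reflexivity.
Qed.

Lemma hat_sum j t : Rk j <= t <= Rk (S j) -> hat j t + hat (S j) t = 1.
Proof. intros H. rewrite hat_left, hat_right by auto. pose proof (sr_Rk j). lra. Qed.

Lemma hat_interp j t : Rk j <= t <= Rk (S j) -> hat j t * Rk j + hat (S j) t * Rk (S j) = t.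
Proof.
  intros H. rewrite hat_left, hat_right by auto. pose proof (sr_Rk j).
  replace ((Rk (S j) - t) * sl_r j * Rk j + (t - Rk j) * sl_r j * Rk (S j)) with
    (t * ((Rk (S j) - Rk j) * sl_r j)) by ring. rewrite H0; ring.
Qed.

Lemma hat_at j : hat j (Rk j) = 1.
Proof.
  rewrite hat_left. - rewrite sr_Rk; reflexivity. - pose proof (Rk_le j (S j) ltac:(lia)); lra.
Qed.

Lemma hat_zero_lo j t : t <= lo j -> hat j t = 0.
Proof.
  intros H. unfold hat. pose proof (sl_l_pos j).
  assert ((t - lo j) * sl_l j <= 0) by (apply mul_np; lra).
  apply Rmax_left. pose proof (Rmin_l ((t - lo j) * sl_l j) ((Rk (S j) - t) * sl_r j)). lra.
Qed.

Lemma hat_zero_hi j t : Rk (S j) <= t -> hat j t = 0.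
Proof.
  intros H. unfold hat. pose proof (sl_r_pos j).
  assert ((Rk (S j) - t) * sl_r j <= 0) by (apply mul_np; lra).
  apply Rmax_left. pose proof (Rmin_r ((t - lo j) * sl_l j) ((Rk (S j) - t) * sl_r j)). lra.
Qed.

Lemma hat_pos_S j t : Rk j < t <= Rk (S j) -> 0 < hat (S j) t.
Proof.
  intros H. rewrite hat_right by lra. apply Rmult_lt_0_compat; [lra|apply sl_r_pos].
Qed.

Lemma Rmax0_lip a b : Rabs (Rmax 0 a - Rmax 0 b) <= Rabs (a - b).
Proof. unfold Rmax, Rabs; repeat destruct Rle_dec; repeat destruct Rcase_abs; lra. Qed.
Lemma Rmin_lip a1 a2 b1 b2 : Rabs (Rmin a1 a2 - Rmin b1 b2) <= Rmax (Rabs (a1 - b1)) (Rabs (a2 - b2)).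
Proof. unfold Rmin, Rmax, Rabs; repeat destruct Rle_dec; repeat destruct Rcase_abs; lra. Qed.

Lemma hat_lip j t t' C : sl_l j <= C -> sl_r j <= C -> Rabs (hat j t - hat j t') <= C * Rabs (t - t').
Proof.
  intros H1 H2. unfold hat. eapply Rle_trans; [apply Rmax0_lip|].
  eapply Rle_trans; [apply Rmin_lip|]. apply Rmax_lub.
  - replace ((t - lo j) * sl_l j - (t' - lo j) * sl_l j) with ((t - t') * sl_l j) by ring.
    rewrite Rabs_mult, (Rabs_pos_eq (sl_l j)) by (left; apply sl_l_pos).
    rewrite Rmult_comm. apply Rmult_le_compat_r; [apply Rabs_pos|auto].
  - replace ((Rk (S j) - t) * sl_r j - (Rk (S j) - t') * sl_r j) with (- ((t - t') * sl_r j)) by ring.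
    rewrite Rabs_Ropp, Rabs_mult, (Rabs_pos_eq (sl_r j)) by (left; apply sl_r_pos).
    rewrite Rmult_comm. apply Rmult_le_compat_r; [apply Rabs_pos|auto].
Qed.

Lemma hat_le_lo j t C d : sl_l j <= C -> 0 <= d -> t - lo j <= d -> hat j t <= C * d.
Proof.
  intros H1 H2 H3. unfold hat. pose proof (sl_l_pos j).
  apply Rmax_lub; [apply Rmult_le_pos; lra|].
  eapply Rle_trans; [apply Rmin_l|].
  destruct (Rle_lt_dec (t - lo j) 0).
  - assert ((t - lo j) * sl_l j <= 0) by (apply mul_np; lra). apply Rle_trans with 0; [lra|apply Rmult_le_pos; lra].
  - rewrite Rmult_comm. apply Rmult_le_compat; lra.
Qed.

Section Main.
Variable V : Type.
Variable adj : V -> V -> Prop.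
Variable x0 : V.
Notation T := (Tbar adj x0).
Notation dT := (Tbar_dist adj x0).

Lemma Tbar_eq (z w : T) : (forall i, g z i = g w i) -> tt z = tt w -> z = w.
Proof.
  destruct z as [g1 t1 r1 a1 b1 c1 d1], w as [g2 t2 r2 a2 b2 c2 d2]; simpl.
  intros Hg Ht. assert (g1 = g2) by (apply functional_extensionality; auto). subst.
  f_equal; apply proof_irrelevance.
Qed.

Lemma g_Some (z : T) i : (exists v, g z (S i) = Some v) <-> Rk i < tt z.
Proof. exact (g_def _ _ z i). Qed.
Lemma g_None (z : T) i : g z (S i) = None <-> tt z <= Rk i.
Proof.
  pose proof (g_Some z i). split.
  - intros E. destruct (Rle_lt_dec (tt z) (Rk i)); auto. destruct (proj2 H r) as [v Hv]; congruence.
  - intros Hle. destruct (g z (S i)) eqn:E; auto. assert (Rk i < tt z) by (apply H; eauto). lra.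
Qed.
Lemma tt_bounds (z : T) : 0 <= tt z <= 1.
Proof. exact (tt_range _ _ z). Qed.

Definition Aset (z w : T) := fun r => exists k, agree z w k /\ r = 1 - (1/2)^k.
Definition A (z w : T) : R := real (Lub_Rbar (Aset z w)).

Lemma gromov_eq z w : gromov z w = Rmin (Rmin (tt z) (tt w)) (A z w).
Proof. reflexivity. Qed.
Lemma dist_eq z w : dT z w = tt z + tt w - 2 * Rmin (Rmin (tt z) (tt w)) (A z w).
Proof. reflexivity. Qed.

Lemma agree0 (z w : T) : agree z w 0.
Proof. intros i Hi. assert (i = 0%nat) by lia; subst. now rewrite !g_0. Qed.

Lemma A_spec z w : (forall k, agree z w k -> Rk k <= A z w) /\
  (forall c, (forall k, agree z w k -> Rk k <= c) -> A z w <= c).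
Proof.
  destruct (Lub_Rbar_correct (Aset z w)) as [Hub Hlub].
  assert (ub1 : is_ub_Rbar (Aset z w) 1).
  { intros x [k [_ ->]]; simpl. pose proof (hp_pos k); lra. }
  assert (E0 : Aset z w 0). { exists 0%nat; split; [apply agree0|simpl; lra]. }
  pose proof (Hub _ E0) as H0. pose proof (Hlub _ ub1) as H1.
  unfold A. destruct (Lub_Rbar (Aset z w)) as [l| |]; simpl in *; try contradiction.
  split.
  - intros k Hk. apply (Hub (Rk k)). exists k; split; auto.
  - intros c Hc. apply (Hlub c). intros x [k [Hk ->]]. simpl. apply Hc; auto.
Qed.
Lemma A_ge z w k : agree z w k -> Rk k <= A z w.
Proof. apply A_spec. Qed.
Lemma A_le z w c : (forall k, agree z w k -> Rk k <= c) -> A z w <= c.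
Proof. apply A_spec. Qed.
Lemma A_nonneg z w : 0 <= A z w.
Proof. rewrite <- Rk_0. apply A_ge, agree0. Qed.
Lemma A_sup z w c : c < A z w -> exists k, agree z w k /\ c < Rk k.
Proof.
  intros H. apply NNPP; intros Hn. assert (A z w <= c); [|lra].
  apply A_le. intros k Hk. destruct (Rle_lt_dec (Rk k) c); auto. exfalso; apply Hn; exists k; split; auto.
Qed.
Lemma agree_sym (z w : T) k : agree z w k -> agree w z k.
Proof. intros H i Hi; symmetry; auto. Qed.
Lemma agree_trans (z w u : T) k : agree z w k -> agree w u k -> agree z u k.
Proof. intros H1 H2 i Hi; rewrite H1; auto. Qed.
Lemma agree_le (z w : T) k k' : (k' <= k)%nat -> agree z w k -> agree z w k'.
Proof. intros H1 H2 i Hi; apply H2; lia. Qed.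
Lemma A_sym z w : A z w = A w z.
Proof.
  apply Rle_antisym; apply A_le; intros k Hk; apply A_ge, agree_sym; auto.
Qed.
Lemma A_ultra x y z : Rmin (A x y) (A y z) <= A x z.
Proof.
  destruct (Rle_lt_dec (Rmin (A x y) (A y z)) (A x z)) as [H|H]; auto.
  exfalso. apply Rmin_Rgt in H as [H1 H2].
  destruct (A_sup _ _ _ H1) as [k1 [Hk1 Hr1]]. destruct (A_sup _ _ _ H2) as [k2 [Hk2 Hr2]].
  assert (agree x z (Nat.min k1 k2)).
  { apply agree_trans with y; [apply agree_le with k1|apply agree_le with k2]; auto; lia. }
  apply A_ge in H. destruct (Nat.min_spec k1 k2) as [[_ E]|[_ E]]; rewrite E in H; lra.
Qed.
Lemma A_diff z w i : g z (S i) <> g w (S i) -> A z w <= Rk i.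
Proof.
  intros H. apply A_le. intros k Hk. apply Rk_le.
  destruct (Nat.le_gt_cases k i); auto. exfalso; apply H, Hk; lia.
Qed.

Definition compat (z w : T) := forall i, g z i <> None -> g w i <> None -> g z i = g w i.

Lemma compat_A z w : compat z w -> Rmin (tt z) (tt w) <= A z w.
Proof.
  intros Hc. destruct (Rle_lt_dec (Rmin (tt z) (tt w)) (A z w)) as [H|H]; auto. exfalso.
  pose proof (tt_bounds z); pose proof (tt_bounds w).
  assert (Hm : Rmin (tt z) (tt w) <= 1) by (pose proof (Rmin_l (tt z) (tt w)); lra).
  destruct (Rk_big (A z w)) as [N HN]; [lra|].
  destruct (first_step (fun k => A z w < Rk k) N) as [k [Hk1 Hk2]]; auto.
  { rewrite Rk_0; pose proof (A_nonneg z w); lra. }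
  apply Rnot_lt_le in Hk1.
  assert (Hag : agree z w (S k)).
  { intros i Hi. destruct i as [|j]. { now rewrite !g_0. }
    apply Hc.
    - destruct (proj2 (g_Some z j)) as [v Hv]; [|congruence].
      pose proof (Rk_le j k ltac:(lia)). pose proof (Rmin_l (tt z) (tt w)); lra.
    - destruct (proj2 (g_Some w j)) as [v Hv]; [|congruence].
      pose proof (Rk_le j k ltac:(lia)). pose proof (Rmin_r (tt z) (tt w)); lra. }
  apply A_ge in Hag. lra.
Qed.

Lemma compat_dist z w : compat z w -> dT z w = Rabs (tt z - tt w).
Proof.
  intros Hc. rewrite dist_eq. pose proof (compat_A z w Hc).
  rewrite (Rmin_left _ (A z w)) by auto.
  unfold Rmin; destruct (Rle_dec (tt z) (tt w)).
  - rewrite Rabs_left1 by lra; lra.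
  - rewrite Rabs_right by lra; lra.
Qed.

Lemma A_refl z : 1 <= A z z.
Proof.
  destruct (Rle_lt_dec 1 (A z z)) as [H|H]; auto.
  destruct (Rk_big _ H) as [k Hk]. pose proof (A_ge z z k ltac:(intros i _; auto)). lra.
Qed.

Lemma dist_nonneg z w : 0 <= dT z w.
Proof.
  rewrite dist_eq. pose proof (Rmin_l (Rmin (tt z) (tt w)) (A z w)).
  pose proof (Rmin_l (tt z) (tt w)). pose proof (Rmin_r (tt z) (tt w)).
  pose proof (tt_bounds z); pose proof (tt_bounds w); lra.
Qed.

Lemma tt_lip z w : Rabs (tt z - tt w) <= dT z w.
Proof.
  rewrite dist_eq. pose proof (Rmin_l (Rmin (tt z) (tt w)) (A z w)).
  pose proof (Rmin_l (tt z) (tt w)). pose proof (Rmin_r (tt z) (tt w)).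
  unfold Rabs; destruct Rcase_abs; lra.
Qed.

Lemma dist_sym z w : dT z w = dT w z.
Proof. rewrite !dist_eq, A_sym, (Rmin_comm (tt z)). lra. Qed.

Lemma dist_tri x y z : dT x z <= dT x y + dT y z.
Proof.
  rewrite !dist_eq. pose proof (A_ultra x y z).
  set (a := A x y) in *; set (b := A y z) in *; set (c := A x z) in *.
  set (tx := tt x); set (ty := tt y); set (tz := tt z).
  unfold Rmin in *; repeat destruct Rle_dec; lra.
Qed.

Lemma dist_zero z w : dT z w = 0 -> z = w.
Proof.
  intros H. rewrite dist_eq in H.
  pose proof (Rmin_l (Rmin (tt z) (tt w)) (A z w)) as H1.
  pose proof (Rmin_r (Rmin (tt z) (tt w)) (A z w)) as H2.
  pose proof (Rmin_l (tt z) (tt w)). pose proof (Rmin_r (tt z) (tt w)).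
  assert (Ht : tt z = tt w) by lra.
  assert (HA : tt z <= A z w) by lra.
  apply Tbar_eq; auto. intros [|i]. { now rewrite !g_0. }
  destruct (Rlt_le_dec (Rk i) (tt z)) as [Hl|Hl].
  - destruct (A_sup z w (Rk i)) as [k [Hk Hk']]; [lra|].
    apply Hk. apply Rk_lt_inv in Hk'. lia.
  - rewrite (proj2 (g_None z i) Hl). symmetry; apply g_None; lra.
Qed.

Lemma dist_refl z : dT z z = 0.
Proof.
  rewrite dist_eq. pose proof (A_refl z). pose proof (tt_bounds z).
  rewrite (Rmin_left (tt z) (tt z)) by lra. rewrite Rmin_left by lra. lra.
Qed.

Lemma is_metric_T : is_metric dT.
Proof.
  split; [exact dist_nonneg|]. split; [|split; [exact dist_sym|exact dist_tri]].
  intros x y; split; [apply dist_zero| intros ->; apply dist_refl].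
Qed.


Lemma real_lip a b t A0 A1 : 0<=a -> 0<=b -> 0<=t -> 0 <= A0 -> A0 <= A1 ->
  Rmin t a + Rmin t b - 2*Rmin (Rmin (Rmin t a) (Rmin t b)) A1 <= a + b - 2 * Rmin (Rmin a b) A0.
Proof. intros. unfold Rmin; repeat destruct Rle_dec; lra. Qed.

Definition clampT (z : T) (t : R) : R := Rmax 0 (Rmin t (tt z)).
Definition gtr (z : T) (c : R) (i : nat) : option V :=
  match i with O => g z O | S j => if Rlt_dec (Rk j) c then g z (S j) else None end.

Lemma gtr_some z c i v : gtr z c i = Some v -> g z i = Some v.
Proof. destruct i; simpl; auto. destruct Rlt_dec; congruence. Qed.

Lemma clamp_range z t : 0 <= clampT z t <= tt z.
Proof. unfold clampT, Rmax, Rmin; pose proof (tt_bounds z); repeat destruct Rle_dec; lra. Qed.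
Lemma clamp_lip z s t : Rabs (clampT z s - clampT z t) <= Rabs (s - t).
Proof. unfold clampT, Rmax, Rmin, Rabs; pose proof (tt_bounds z); repeat destruct Rle_dec; repeat destruct Rcase_abs; lra. Qed.
Lemma clamp_eq z t : 0 <= t <= tt z -> clampT z t = t.
Proof. unfold clampT, Rmax, Rmin; repeat destruct Rle_dec; lra. Qed.

Definition trunc (z : T) (t : R) : T.
Proof.
  refine (mkTbar _ _ _ (gtr z (clampT z t)) (clampT z t) _ _ _ _ _).
  - pose proof (clamp_range z t); pose proof (tt_bounds z); lra.
  - apply g_0.
  - intros i. change (1 - (1/2)^i) with (Rk i). cbn [gtr].
    destruct Rlt_dec as [H|H]; split.
     + intros _; assumption.
     + intros _; apply g_Some. pose proof (clamp_range z t); lra.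
     + intros [v Hv]; discriminate.
     + intros H'; contradiction.
  - intros i v Hv; apply gtr_some in Hv; eapply g_level; eauto.
  - intros i u v H1 H2; apply gtr_some in H1; apply gtr_some in H2; eapply g_adj; eauto.
Defined.

Lemma tt_trunc z t : tt (trunc z t) = clampT z t.
Proof. reflexivity. Qed.
Lemma g_trunc z t i : g (trunc z t) i = gtr z (clampT z t) i.
Proof. reflexivity. Qed.

Lemma trunc_id z t : tt z <= t -> trunc z t = z.
Proof.
  intros H. assert (Hc : clampT z t = tt z).
  { unfold clampT, Rmax, Rmin; pose proof (tt_bounds z); repeat destruct Rle_dec; lra. }
  apply Tbar_eq; [|rewrite tt_trunc; auto].
  intros [|i]; rewrite g_trunc; cbn [gtr]; auto. rewrite Hc.
  destruct Rlt_dec; auto. symmetry; apply g_None; lra.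
Qed.

Lemma trunc_trunc z s t : 0 <= s <= t -> trunc (trunc z t) s = trunc z s.
Proof.
  intros H. assert (Hc : clampT (trunc z t) s = clampT z s).
  { unfold clampT; rewrite tt_trunc; unfold clampT, Rmax, Rmin; pose proof (tt_bounds z);
    repeat destruct Rle_dec; lra. }
  apply Tbar_eq; [|rewrite !tt_trunc; auto].
  intros [|i]; rewrite !g_trunc; cbn [gtr]; auto. rewrite Hc, g_trunc; cbn [gtr].
  destruct (Rlt_dec (Rk i) (clampT z s)); auto.
  destruct Rlt_dec; auto. exfalso. unfold clampT in *.
  unfold Rmax, Rmin in *; repeat destruct Rle_dec; lra.
Qed.

Lemma compat_trunc z s t : compat (trunc z s) (trunc z t).
Proof.
  intros i H1 H2. destruct (g (trunc z s) i) eqn:E1; [|congruence].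
  destruct (g (trunc z t) i) eqn:E2; [|congruence].
  apply gtr_some in E1; apply gtr_some in E2. congruence.
Qed.

Lemma dist_trunc_same z s t : dT (trunc z s) (trunc z t) <= Rabs (s - t).
Proof.
  rewrite compat_dist by apply compat_trunc. rewrite !tt_trunc. apply clamp_lip.
Qed.

Lemma agree_trunc z w t k : 0 <= t -> agree z w k -> agree (trunc z t) (trunc w t) k.
Proof.
  intros Ht Hag [|j] Hj. { now rewrite !g_0. }
  rewrite !g_trunc; cbn [gtr]. pose proof (Hag (S j) Hj) as Hz.
  destruct (g z (S j)) eqn:E.
  - assert (H1 : Rk j < tt z) by (apply g_Some; eauto).
    assert (H2 : Rk j < tt w) by (apply g_Some; exists v; congruence).
    destruct (Rlt_dec (Rk j) (clampT z t)), (Rlt_dec (Rk j) (clampT w t)); auto; exfalso;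
    unfold clampT, Rmax, Rmin in *; repeat destruct Rle_dec; lra.
  - destruct Rlt_dec, Rlt_dec; auto.
Qed.

Lemma dist_trunc_lip z w t : 0 <= t -> dT (trunc z t) (trunc w t) <= dT z w.
Proof.
  intros Ht. assert (HA : A z w <= A (trunc z t) (trunc w t)).
  { apply A_le; intros k Hk; apply A_ge, agree_trunc; auto. }
  rewrite !dist_eq, !tt_trunc.
  assert (E1 : clampT z t = Rmin t (tt z)).
  { unfold clampT; apply Rmax_right. pose proof (tt_bounds z). unfold Rmin; destruct Rle_dec; lra. }
  assert (E2 : clampT w t = Rmin t (tt w)).
  { unfold clampT; apply Rmax_right. pose proof (tt_bounds w). unfold Rmin; destruct Rle_dec; lra. }
  rewrite E1, E2. apply real_lip; auto; try apply tt_bounds. apply A_nonneg.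
Qed.

Definition base : T.
Proof.
  refine (mkTbar _ _ _ (fun i => match i with O => Some x0 | S _ => None end) 0 _ _ _ _ _).
  - lra.
  - reflexivity.
  - intros i; split; [intros [v Hv]; discriminate|]. intros H. pose proof (hp_le1 i). lra.
  - intros [|i] v Hv; [|discriminate]. injection Hv as <-. split.
    + exists (fun _ => x0); repeat split. intros; lia.
    + intros; lia.
  - intros i u v _ H; discriminate.
Defined.

Lemma trunc_0 z : trunc z 0 = base.
Proof.
  assert (Hc : clampT z 0 = 0).
  { unfold clampT, Rmax, Rmin; pose proof (tt_bounds z); repeat destruct Rle_dec; lra. }
  apply Tbar_eq; [|rewrite tt_trunc; auto].
  intros [|i]; rewrite g_trunc; cbn [gtr]. { apply g_0. }
  rewrite Hc. destruct Rlt_dec; auto. pose proof (Rk_ge0 i); lra.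
Qed.

Lemma prod_dist_lt (p q : R * T) e : prod_dist dT p q < e ->
  Rabs (fst p - fst q) < e /\ dT (snd p) (snd q) < e.
Proof.
  unfold prod_dist; intros H. pose proof (Rmax_l (Rabs (fst p - fst q)) (dT (snd p) (snd q))).
  pose proof (Rmax_r (Rabs (fst p - fst q)) (dT (snd p) (snd q))). lra.
Qed.

Lemma hom_cont (r : R -> R) (Lr : R) : 0 <= Lr ->
  (forall s, 0 <= s <= 1 -> 0 <= r s) ->
  (forall s s', Rabs (r s - r s') <= Lr * Rabs (s - s')) ->
  homotopy_cont dT dT (fun s x => trunc x (r s)).
Proof.
  intros HL Hpos Hlip [s x] Hx e He. exists (e / (2 * (Lr + 1))). split.
  { apply Rdiv_lt_0_compat; lra. }
  intros [s' y] Hy Hd. apply prod_dist_lt in Hd as [H1 H2]; simpl in *.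
  unfold unit_interval_x in Hx; simpl in Hx.
  pose proof (dist_tri (trunc x (r s)) (trunc y (r s)) (trunc y (r s'))).
  pose proof (dist_trunc_lip x y (r s) (Hpos s Hx)).
  pose proof (dist_trunc_same y (r s) (r s')).
  pose proof (Hlip s s').
  assert (Lr * Rabs (s - s') <= Lr * (e / (2 * (Lr + 1)))) by (apply Rmult_le_compat_l; lra).
  assert (Lr * (e / (2 * (Lr + 1))) + e / (2 * (Lr + 1)) < e).
  { assert (E : Lr * (e / (2 * (Lr + 1))) + e / (2 * (Lr + 1)) = e / 2) by (field; lra). lra. }
  lra.
Qed.

Lemma contractible_T : contractible dT.
Proof.
  exists base, (fun s x => trunc x (1 - s)). split; [|split].
  - apply (hom_cont (fun s => 1 - s) 1); [lra| intros; lra|].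
    intros s s'. replace (1 - s - (1 - s')) with (- (s - s')) by ring. rewrite Rabs_Ropp; lra.
  - intros x. apply trunc_id. replace (1 - 0) with 1 by lra. apply tt_bounds.
  - intros x. replace (1 - 1) with 0 by lra. apply trunc_0.
Qed.


Definition isV (j : nat) (Q : T) := tt Q = Rk j.

Lemma isV_g j Q i : isV j Q -> (g Q i <> None <-> (i <= j)%nat).
Proof.
  intros H. destruct i as [|i]. { rewrite g_0; split; [lia|congruence]. }
  split.
  - intros Hn. destruct (g Q (S i)) eqn:E; [|congruence].
    assert (Rk i < tt Q) by (apply g_Some; eauto). rewrite H in H0. apply Rk_lt_inv in H0. lia.
  - intros Hle. destruct (proj2 (g_Some Q i)) as [v Hv]; [|congruence].
    rewrite H; apply Rk_lt; lia.
Qed.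

Lemma isV_base : isV 0 base.
Proof. unfold isV; rewrite Rk_0; reflexivity. Qed.

Lemma vert_exists z j : (forall i, (i < j)%nat -> Rk i < tt z) ->
  exists Q, isV j Q /\ agree Q z j.
Proof.
  intros Hz.
  assert (Q : { Q : T | isV j Q /\ agree Q z j }).
  { unshelve refine (exist _ (mkTbar _ _ _ (fun i => if le_dec i j then g z i else None) (Rk j) _ _ _ _ _) _).
    - pose proof (Rk_ge0 j); pose proof (Rk_lt1 j); lra.
    - simpl; apply g_0.
    - intros i. change (1 - (1/2)^i) with (Rk i). cbn beta.
      destruct (le_dec (S i) j) as [H|H]; split.
      + intros _; apply Rk_lt; lia.
      + intros _; apply g_Some. apply Hz; lia.
      + intros [v Hv]; discriminate.
      + intros H'; apply Rk_lt_inv in H'; lia.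
    - intros i v; destruct le_dec; [apply g_level|discriminate].
    - intros i u v; destruct le_dec, le_dec; try discriminate; apply g_adj.
    - split; [reflexivity|]. intros i Hi; simpl. destruct le_dec; [reflexivity|lia]. }
  destruct Q as [Q HQ]; eauto.
Qed.

Lemma vert_unique j Q Q' : isV j Q -> isV j Q' -> agree Q Q' j -> Q = Q'.
Proof.
  intros H1 H2 Hag. apply Tbar_eq; [|unfold isV in *; congruence].
  intros i. destruct (le_dec i j); [apply Hag; auto|].
  destruct (g Q i) eqn:E1. { exfalso; apply n; apply (isV_g j Q i H1); congruence. }
  destruct (g Q' i) eqn:E2; auto. exfalso; apply n; apply (isV_g j Q' i H2); congruence.
Qed.

Lemma vert_of_trunc z j : isV j z -> forall t, 0 <= t <= Rk j -> True.
Proof. auto. Qed.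

Section LFin.
Hypothesis LF : locally_finite adj.

Lemma children_finite j P : exists l, forall Q, isV (S j) Q -> agree Q P j -> In Q l.
Proof.
  destruct (g P j) as [v|] eqn:EP.
  2:{ exists nil. intros Q HQ Hag. exfalso. pose proof (proj2 (isV_g (S j) Q j HQ) ltac:(lia)).
      rewrite (Hag j (le_n j)) in H; auto. }
  assert (Hgen : forall ns, exists l, forall Q, isV (S j) Q -> agree Q P j ->
            (exists w, g Q (S j) = Some w /\ In w ns) -> In Q l).
  { induction ns as [|w ns IH].
    - exists nil. intros Q _ _ [w [_ []]].
    - destruct IH as [l Hl].
      destruct (classic (exists Q0, isV (S j) Q0 /\ agree Q0 P j /\ g Q0 (S j) = Some w)) as [[Q0 [H1 [H2 H3]]]|Hn].
      + exists (Q0 :: l). intros Q HQ Hag [w' [Hw' [<-|Hin]]].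
        * left. apply vert_unique with (S j); auto. intros i Hi.
          destruct (le_lt_dec i j). { rewrite H2, Hag; auto. }
          assert (i = S j) by lia; subst; congruence.
        * right; apply Hl; eauto.
      + exists l. intros Q HQ Hag [w' [Hw' [<-|Hin]]].
        * exfalso; apply Hn; eauto.
        * apply Hl; eauto. }
  destruct (LF v) as [nb Hnb]. destruct (Hgen nb) as [l Hl]. exists l.
  intros Q HQ Hag. apply Hl; auto.
  destruct (g Q (S j)) as [w|] eqn:E.
  - exists w; split; auto. apply Hnb. eapply g_adj; [|exact E]. rewrite Hag; auto.
  - exfalso. apply (proj2 (isV_g (S j) Q (S j) HQ)); auto.
Qed.

Lemma level_finite j : exists l, forall Q, isV j Q -> In Q l.
Proof.
  induction j as [|j [l Hl]].
  - exists (base :: nil). intros Q HQ. left. apply vert_unique with 0%nat; auto using isV_base.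
    intros i Hi. assert (i = 0%nat) by lia; subst. now rewrite !g_0.
  - assert (Hgen : forall l0, exists l', forall Q, isV (S j) Q ->
              (exists P, In P l0 /\ agree Q P j) -> In Q l').
    { induction l0 as [|P l0 IH].
      - exists nil. intros Q _ [P [[] _]].
      - destruct IH as [l1 H1]. destruct (children_finite j P) as [l2 H2].
        exists (l2 ++ l1). intros Q HQ [P' [[<-|Hin] Hag]]; apply in_or_app.
        + left; auto.
        + right; apply H1; eauto. }
    destruct (Hgen l) as [l' Hl']. exists l'. intros Q HQ. apply Hl'; auto.
    destruct (vert_exists Q j) as [P [HP Hag]].
    { intros i Hi. unfold isV in HQ; rewrite HQ. apply Rk_lt; lia. }
    exists P; split; auto. apply agree_sym; auto.
Qed.

Lemma filter_isV j l : exists l', (forall Q, In Q l' -> isV j Q) /\ (forall Q, In Q l -> isV j Q -> In Q l').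
Proof.
  induction l as [|P l [l' [H1 H2]]].
  - exists nil; split; [intros _ []|intros _ []].
  - destruct (classic (isV j P)).
    + exists (P :: l'); split.
      * intros Q [<-|HQ]; auto.
      * intros Q [<-|HQ] HV; [left|right]; auto.
    + exists l'; split; auto. intros Q [<-|HQ] HV; [contradiction|auto].
Qed.

Lemma upto_finite m : exists L : list (nat * T),
  (forall j Q, In (j, Q) L -> isV j Q /\ (j <= m)%nat) /\
  (forall j Q, (j <= m)%nat -> isV j Q -> In (j, Q) L).
Proof.
  induction m as [|m [L [H1 H2]]].
  - exists ((0%nat, base) :: nil). split.
    + intros j Q [E|[]]. injection E as <- <-. split; auto using isV_base.
    + intros j Q Hj HQ. assert (j = 0%nat) by lia; subst. left. f_equal.
      apply vert_unique with 0%nat; auto using isV_base. apply agree0.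
  - destruct (level_finite (S m)) as [l0 Hl0]. destruct (filter_isV (S m) l0) as [l [Hl1 Hl2]].
    exists (L ++ map (fun Q => (S m, Q)) l). split.
    + intros j Q Hin. apply in_app_or in Hin as [Hin|Hin].
      * destruct (H1 j Q Hin); split; auto.
      * apply in_map_iff in Hin as [Q' [E Hin]]. injection E as <- <-. split; auto.
    + intros j Q Hj HQ. apply in_or_app. destruct (le_lt_dec j m).
      * left; auto.
      * right. assert (j = S m) by lia; subst. apply in_map_iff. exists Q; split; auto.
Qed.

End LFin.


Definition Cone (j : nat) (Q : T) (z : T) : Prop :=
  (forall i, (i < j)%nat -> Rk i < tt z) /\ agree z Q j.

Lemma trunc_of_cone j Q z : isV j Q -> agree z Q j -> tt z <= Rk j -> z = trunc Q (tt z).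
Proof.
  intros HQ Hag Hle. unfold isV in HQ.
  apply Tbar_eq; [|rewrite tt_trunc, clamp_eq; auto; pose proof (tt_bounds z); lra].
  intros [|i]; rewrite g_trunc; cbn [gtr]. { now rewrite !g_0. }
  rewrite clamp_eq by (pose proof (tt_bounds z); lra).
  destruct Rlt_dec as [H|H].
  - apply Hag. assert (Rk i < Rk j) by lra. apply Rk_lt_inv in H0; lia.
  - apply g_None; lra.
Qed.

Lemma cone_decomp j Q z : isV j Q -> Cone j Q z ->
  (exists t, 0 <= t <= Rk j /\ z = trunc Q t) \/
  (exists Q', isV (S j) Q' /\ agree Q' Q j /\ Cone (S j) Q' z).
Proof.
  intros HQ [Hz Hag]. destruct (Rle_lt_dec (tt z) (Rk j)) as [Hle|Hlt].
  - left. exists (tt z). split; [pose proof (tt_bounds z); lra|]. apply trunc_of_cone with j; auto.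
  - right. destruct (vert_exists z (S j)) as [Q' [HQ' Hag']].
    { intros i Hi. pose proof (Rk_le i j ltac:(lia)); lra. }
    exists Q'; split; [auto|split].
    + apply agree_trans with z; [apply agree_le with (S j); auto|auto].
    + split. { intros i Hi. pose proof (Rk_le i j ltac:(lia)); lra. }
      apply agree_sym; auto.
Qed.

Definition ray (f : nat -> T) (H1 : forall j, isV j (f j))
  (H2 : forall j, agree (f (S j)) (f j) j) : T.
Proof.
  refine (mkTbar _ _ _ (fun i => g (f i) i) 1 _ _ _ _ _).
  - lra.
  - apply g_0.
  - intros i. change (1 - (1/2)^i) with (Rk i). split; intros _; [apply Rk_lt1|].
    destruct (g (f (S i)) (S i)) eqn:E; eauto. exfalso.
    exact (proj2 (isV_g (S i) (f (S i)) (S i) (H1 (S i))) (le_n _) E).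
  - intros i v Hv; eapply g_level; eauto.
  - intros i u v Hu Hv. eapply (g_adj _ _ (f (S i))); [|exact Hv].
    rewrite (H2 i i (le_n i)); exact Hu.
Defined.

Lemma ray_agree f H1 H2 j : agree (f j) (ray f H1 H2) j.
Proof.
  assert (Hd : forall d i, g (f (d + i)%nat) i = g (f i) i).
  { induction d; intros i; auto. simpl. rewrite (H2 (d + i)%nat i) by lia. auto. }
  intros i Hi. simpl. replace j with ((j - i) + i)%nat by lia. apply Hd.
Qed.

Section Compact.
Variable I : Type.
Variable U : I -> T -> Prop.
Hypothesis Uopen : forall i, is_open dT (U i).
Hypothesis Ucov : forall x, exists i, U i x.

Definition good (S : T -> Prop) := exists l : list I, forall z, S z -> exists i, In i l /\ U i z.

Lemma good_union S1 S2 : good S1 -> good S2 -> good (fun z => S1 z \/ S2 z).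
Proof.
  intros [l1 H1] [l2 H2]. exists (l1 ++ l2). intros z [Hz|Hz].
  - destruct (H1 z Hz) as [i [Hi Hu]]. exists i; split; auto. apply in_or_app; auto.
  - destruct (H2 z Hz) as [i [Hi Hu]]. exists i; split; auto. apply in_or_app; auto.
Qed.
Lemma good_sub (S S' : T -> Prop) : (forall z, S z -> S' z) -> good S' -> good S.
Proof. intros H [l Hl]. exists l; auto. Qed.

Lemma seg_good Q a b : good (fun z => exists t, a <= t <= b /\ z = trunc Q t).
Proof.
  destruct (Rle_lt_dec a b) as [Hab|Hab]; [|exists nil; intros z [t [Ht _]]; lra].
  set (f := trunc Q).
  set (E := fun s => a <= s <= b /\ good (fun z => exists t, a <= t <= s /\ z = f t)).
  assert (Ea : E a).
  { split; [lra|]. destruct (Ucov (f a)) as [i Hi]. exists (i::nil). intros z [t [Ht ->]].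
    exists i; split; [left; auto|]. replace t with a by lra. auto. }
  assert (Hb : bound E). { exists b. intros s [Hs _]; lra. }
  destruct (completeness E Hb (ex_intro _ a Ea)) as [m [Hub Hlub]].
  assert (Ham : a <= m) by (apply Hub; auto).
  assert (Hmb : m <= b) by (apply Hlub; intros s [Hs _]; lra).
  destruct (Ucov (f m)) as [i0 Hi0]. destruct (Uopen i0 (f m) Hi0) as [e [He HU]].
  assert (Hs : exists s, E s /\ m - e < s).
  { apply NNPP; intros Hn. assert (m <= m - e); [|lra]. apply Hlub. intros s Es.
    destruct (Rle_lt_dec s (m - e)); auto. exfalso; apply Hn; exists s; auto. }
  destruct Hs as [s [Es Hs2]]. assert (Hsm : s <= m) by (apply Hub; auto).
  destruct Es as [Hs1 Hgs].
  set (s' := Rmin b (m + e/2)).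
  assert (Hs'1 : s' <= m + e/2) by (unfold s'; apply Rmin_r).
  assert (Hs'2 : s' <= b) by (unfold s'; apply Rmin_l).
  assert (Es' : E s').
  { split. { unfold s', Rmin; destruct Rle_dec; lra. }
    destruct Hgs as [l Hl]. exists (i0 :: l). intros z [t [Ht ->]].
    destruct (Rle_lt_dec t s) as [Hts|Hts].
    - destruct (Hl (f t)) as [i [Hin Hi]]; [exists t; split; [lra|auto]|].
      exists i; split; [right|]; auto.
    - exists i0; split; [left; auto|]. apply HU. eapply Rle_lt_trans; [apply dist_trunc_same|].
      unfold Rabs; destruct Rcase_abs; lra. }
  assert (Hs'm : s' <= m) by (apply Hub; auto).
  assert (Es'b : s' = b).
  { unfold s' in *; unfold Rmin in *; destruct Rle_dec; lra. }
  rewrite Es'b in Es'. destruct Es' as [_ Hg]. exact Hg.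
Qed.

Section LF2.
Hypothesis LF : locally_finite adj.

Lemma bad_child j Q : isV j Q -> ~ good (Cone j Q) ->
  exists Q', isV (S j) Q' /\ agree Q' Q j /\ ~ good (Cone (S j) Q').
Proof.
  intros HQ Hbad. apply NNPP; intro Hn. apply Hbad.
  destruct (children_finite LF j Q) as [l Hl].
  assert (Hgl : forall l0, good (fun z => exists Q', In Q' l0 /\ isV (S j) Q' /\ agree Q' Q j /\ Cone (S j) Q' z)).
  { induction l0 as [|P l0 IH]. { exists nil; intros z [Q' [[] _]]. }
    destruct (classic (isV (S j) P /\ agree P Q j)) as [[H1 H2]|Hc].
    - assert (Hg : good (Cone (S j) P)) by (apply NNPP; intro; apply Hn; exists P; auto).
      eapply good_sub; [|apply (good_union _ _ Hg IH)].
      intros z [Q' [[<-|Hin] [H3 [H4 H5]]]]; [left; auto|right; exists Q'; auto].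
    - eapply good_sub; [|apply IH].
      intros z [Q' [[<-|Hin] [H3 [H4 H5]]]]; [exfalso; apply Hc; auto|exists Q'; auto]. }
  eapply good_sub; [|apply (good_union _ _ (seg_good Q 0 (Rk j)) (Hgl l))].
  intros z Hz. destruct (cone_decomp j Q z HQ Hz) as [H|[Q' [H1 [H2 H3]]]];
    [left; auto|right; exists Q'; auto].
Qed.

Definition stepQ (j : nat) (Q : T) : T :=
  epsilon (inhabits base) (fun Q' => isV (S j) Q' /\ agree Q' Q j /\ ~ good (Cone (S j) Q')).
Fixpoint seqQ (j : nat) : T := match j with O => base | S j' => stepQ j' (seqQ j') end.

Lemma seqQ_spec (Hbad : ~ good (Cone 0 base)) j :
  isV j (seqQ j) /\ ~ good (Cone j (seqQ j)).
Proof.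
  induction j as [|j [IH1 IH2]]; [split; auto using isV_base|].
  simpl. unfold stepQ.
  pose proof (epsilon_spec (inhabits base) (fun Q' => isV (S j) Q' /\ agree Q' (seqQ j) j /\ ~ good (Cone (S j) Q'))
     (bad_child j (seqQ j) IH1 IH2)) as [H1 [H2 H3]]. split; auto.
Qed.

Lemma seqQ_agree (Hbad : ~ good (Cone 0 base)) j : agree (seqQ (S j)) (seqQ j) j.
Proof.
  destruct (seqQ_spec Hbad j) as [IH1 IH2].
  simpl. unfold stepQ.
  pose proof (epsilon_spec (inhabits base) (fun Q' => isV (S j) Q' /\ agree Q' (seqQ j) j /\ ~ good (Cone (S j) Q'))
     (bad_child j (seqQ j) IH1 IH2)) as [H1 [H2 H3]]. auto.
Qed.

Lemma not_bad : good (Cone 0 base).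
Proof.
  apply NNPP; intros Hbad.
  set (xi := ray seqQ (fun j => proj1 (seqQ_spec Hbad j)) (seqQ_agree Hbad)).
  destruct (Ucov xi) as [i0 Hi0]. destruct (Uopen i0 xi Hi0) as [e [He HU]].
  destruct (hp_small (e/2)) as [j Hj]; [lra|].
  apply (proj2 (seqQ_spec Hbad (S j))). exists (i0 :: nil). intros z [Hz Hag].
  exists i0; split; [left; auto|]. apply HU.
  assert (Hzx : agree z xi (S j)).
  { apply agree_trans with (seqQ (S j)); auto. apply ray_agree. }
  apply A_ge in Hzx. rewrite A_sym in Hzx.
  assert (Htz : Rk j < tt z) by (apply Hz; lia).
  pose proof (Rk_le j (S j) ltac:(lia)).
  rewrite dist_eq. assert (Ht1 : tt xi = 1) by reflexivity. rewrite Ht1.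
  pose proof (tt_bounds z). unfold Rk in *.
  unfold Rmin; repeat destruct Rle_dec; lra.
Qed.

End LF2.
End Compact.

Lemma compact_T (LF : locally_finite adj) : is_compact dT.
Proof.
  intros I U Uopen Ucov. destruct (not_bad I U Uopen Ucov LF) as [l Hl].
  exists l. intros x. apply Hl. split; [intros; lia|apply agree0].
Qed.


Lemma trunc_char z Q : (forall i, g z i <> None -> g z i = g Q i) -> tt z <= tt Q ->
  z = trunc Q (tt z).
Proof.
  intros Hg Hle.
  apply Tbar_eq; [|rewrite tt_trunc, clamp_eq; auto; pose proof (tt_bounds z); lra].
  intros [|i]; rewrite g_trunc; cbn [gtr]. { now rewrite !g_0. }
  rewrite clamp_eq by (pose proof (tt_bounds z); lra).
  destruct Rlt_dec as [H|H].
  - apply Hg. destruct (proj2 (g_Some z i) H) as [v Hv]; congruence.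
  - apply g_None; lra.
Qed.

Lemma incl_cases (a c : nat) s : s <> nil -> NoDup s -> incl s (a :: c :: nil) ->
  s = a :: nil \/ s = c :: nil \/ s = a :: c :: nil \/ s = c :: a :: nil.
Proof.
  intros Hn Hnd Hi. destruct s as [|x [|y [|z r]]]; [contradiction| | |].
  - destruct (Hi x (or_introl eq_refl)) as [<-|[<-|[]]]; auto.
  - apply NoDup_cons_iff in Hnd as [Hxy _].
    destruct (Hi x (or_introl eq_refl)) as [<-|[<-|[]]];
    destruct (Hi y (or_intror (or_introl eq_refl))) as [<-|[<-|[]]]; auto;
    exfalso; apply Hxy; left; auto.
  - exfalso. apply NoDup_cons_iff in Hnd as [Hx Hnd]. apply NoDup_cons_iff in Hnd as [Hy _].
    destruct (Hi x (or_introl eq_refl)) as [<-|[<-|[]]];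
    destruct (Hi y (or_intror (or_introl eq_refl))) as [<-|[<-|[]]];
    destruct (Hi z (or_intror (or_intror (or_introl eq_refl)))) as [<-|[<-|[]]];
    try (apply Hx; simpl; auto; fail); try (apply Hy; simpl; auto; fail).
Qed.

Section Transfer.
Variable m : nat.
Variable L : list (nat * T).
Hypothesis HL1 : forall j Q, In (j, Q) L -> isV j Q /\ (j <= m)%nat.
Hypothesis HL2 : forall j Q, (j <= m)%nat -> isV j Q -> In (j, Q) L.

Definition nL := length L.
Definition vx (k : nat) : nat * T := nth k L (0%nat, base).
Definition lv k := fst (vx k).
Definition Qv k := snd (vx k).

Lemma vx_isV k : (k < nL)%nat -> isV (lv k) (Qv k) /\ (lv k <= m)%nat.
Proof.
  intros Hk. apply HL1. unfold lv, Qv. rewrite <- surjective_pairing. apply nth_In; auto.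
Qed.

Definition idx (p : nat * T) : nat := epsilon (inhabits 0%nat) (fun k => (k < nL)%nat /\ vx k = p).

Lemma idx_spec p : In p L -> (idx p < nL)%nat /\ vx (idx p) = p.
Proof.
  intros H. unfold idx. apply epsilon_spec. destruct (In_nth L p (0%nat, base) H) as [k [Hk E]].
  exists k; split; auto.
Qed.

Definition edge a c := (a < nL)%nat /\ (c < nL)%nat /\ lv c = S (lv a) /\ agree (Qv c) (Qv a) (lv a).
Definition simp (s : list nat) : Prop :=
  (exists a, (a < nL)%nat /\ s = a :: nil) \/
  (exists a c, edge a c /\ (s = a :: c :: nil \/ s = c :: a :: nil)).

Lemma simp_complex : simplicial_complex_dim_le nL simp 1.
Proof.
  split; [|split].
  - intros s [[a [Ha ->]]|[a [c [[Ha [Hc [Hl _]]] [->| ->]]]]].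
    + repeat split; [congruence|repeat constructor; simpl; tauto| |simpl; lia].
      intros j [<-|[]]; auto.
    + assert (a <> c) by (intros ->; lia).
      repeat split; [congruence| |intros j [<-|[<-|[]]]; auto|simpl; lia].
      constructor; [simpl; intuition|constructor; [simpl; auto|constructor]].
    + assert (a <> c) by (intros ->; lia).
      repeat split; [congruence| |intros j [<-|[<-|[]]]; auto|simpl; lia].
      constructor; [simpl; intuition|constructor; [simpl; auto|constructor]].
  - intros s s' Hs Hn Hnd Hi. destruct Hs as [[a [Ha ->]]|[a [c [He [->| ->]]]]].
    + left; exists a; split; auto.
      assert (Hi' : incl s' (a :: a :: nil)) by (intros x Hx; destruct (Hi x Hx) as [<-|[]]; simpl; auto).
      destruct (incl_cases a a s' Hn Hnd Hi') as [H|[H|[H|H]]]; auto; subst;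
      apply NoDup_cons_iff in Hnd as [Hx _]; exfalso; apply Hx; left; auto.
    + destruct He as [Ha [Hc He']].
      destruct (incl_cases a c s' Hn Hnd Hi) as [H|[H|[H|H]]]; subst.
      * left; exists a; auto.
      * left; exists c; auto.
      * right; exists a, c; split; [split; auto|auto].
      * right; exists a, c; split; [split; auto|auto].
    + destruct He as [Ha [Hc He']].
      assert (Hi' : incl s' (a :: c :: nil)) by (intros x Hx; destruct (Hi x Hx) as [<-|[<-|[]]]; simpl; auto).
      destruct (incl_cases a c s' Hn Hnd Hi') as [H|[H|[H|H]]]; subst.
      * left; exists a; auto.
      * left; exists c; auto.
      * right; exists a, c; split; [split; auto|auto].
      * right; exists a, c; split; [split; auto|auto].
  - intros j Hj. left; exists j; auto.
Qed.

Lemma simp_lt s j : simp s -> In j s -> (j < nL)%nat.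
Proof. intros Hs Hj. destruct simp_complex as [H _]. apply (H s Hs); auto. Qed.

Definition xm (x : T) := trunc x (Rk m).
Definition Pk (k : nat) (x : T) : Prop := (k < nL)%nat /\ k = idx (vx k) /\ agree (xm x) (Qv k) (lv k).
Definition ib (x : T) (k : nat) : R :=
  if excluded_middle_informative (Pk k x) then hat (lv k) (tt (xm x)) else 0.
Definition tau (b : nat -> R) : R := sumR (map (fun k => b k * tt (Qv k)) (seq 0 nL)).

Lemma ib_nonneg x k : 0 <= ib x k.
Proof. unfold ib; destruct excluded_middle_informative; [apply hat_nonneg|lra]. Qed.

Lemma tt_xm x : 0 <= tt (xm x) <= Rk m.
Proof.
  unfold xm; rewrite tt_trunc. pose proof (clamp_range x (Rk m)). split; [lra|].
  unfold clampT, Rmax, Rmin; pose proof (Rk_ge0 m); repeat destruct Rle_dec; lra.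
Qed.

Lemma ib_at x j Q : In (j, Q) L -> agree (xm x) Q j -> ib x (idx (j, Q)) = hat j (tt (xm x)).
Proof.
  intros Hin Hag. destruct (idx_spec _ Hin) as [Hlt Hv].
  unfold ib. destruct excluded_middle_informative as [_|Hn].
  - unfold lv; rewrite Hv; reflexivity.
  - exfalso; apply Hn. split; auto. rewrite Hv. split; auto. unfold Qv, lv; rewrite Hv; auto.
Qed.

Lemma ib_nz x k : ib x k <> 0 -> Pk k x /\ hat (lv k) (tt (xm x)) <> 0 /\ ib x k = hat (lv k) (tt (xm x)).
Proof. unfold ib; destruct excluded_middle_informative; intros H; [auto|congruence]. Qed.

Lemma ib_out x k : (nL <= k)%nat -> ib x k = 0.
Proof. intros H. unfold ib; destruct excluded_middle_informative as [[Hk _]|]; [lia|auto]. Qed.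

Lemma vx_eq k : vx k = (lv k, Qv k).
Proof. apply surjective_pairing. Qed.

Lemma ib_nz_vertex x k : ib x k <> 0 ->
  exists j Q, k = idx (j, Q) /\ isV j Q /\ agree (xm x) Q j /\ hat j (tt (xm x)) <> 0 /\ (j <= m)%nat.
Proof.
  intros H. destruct (ib_nz x k H) as [[Hk [Hi Hag]] [Hh _]].
  destruct (vx_isV k Hk) as [HV Hm].
  exists (lv k), (Qv k). rewrite <- vx_eq. auto.
Qed.

Lemma i_facts x : in_realization nL simp (ib x) /\
  exists u, (u < nL)%nat /\ ib x u <> 0 /\ tau (ib x) <= tt (Qv u) /\ trunc (Qv u) (tau (ib x)) = xm x.
Proof.
  set (t := tt (xm x)). pose proof (tt_xm x) as Ht. fold t in Ht.
  destruct (classic (exists j, (j <= m)%nat /\ t = Rk j)) as [[j [Hjm Htj]]|Hno].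
  -
    assert (HV : isV j (xm x)) by (unfold isV; auto).
    pose proof (HL2 j (xm x) Hjm HV) as Hin. destruct (idx_spec _ Hin) as [Hu Hvu].
    set (u := idx (j, xm x)) in *.
    assert (Hsupp : forall k, k <> u -> ib x k = 0).
    { intros k Hk. apply NNPP; intros Hnz. apply Hk.
      destruct (ib_nz_vertex x k Hnz) as [l [Q [-> [HQ [Hag [Hh Hl]]]]]].
      assert (l = j).
      { destruct (Nat.lt_trichotomy l j) as [Hlt|[Heq|Hgt]]; auto; exfalso; apply Hh.
        - apply hat_zero_hi. fold t; rewrite Htj. apply Rk_le; lia.
        - apply hat_zero_lo. fold t; rewrite Htj. destruct l as [|l]; [lia|]. rewrite lo_S. apply Rk_le; lia. }
      subst l. assert (Q = xm x) by (apply vert_unique with j; auto; apply agree_sym; auto).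
      subst Q. reflexivity. }
    assert (Hbu : ib x u = 1).
    { unfold u. rewrite ib_at; auto; [fold t; rewrite Htj; apply hat_at|intros i _; auto]. }
    assert (HQu : Qv u = xm x) by (unfold Qv; rewrite Hvu; reflexivity).
    assert (Htau : tau (ib x) = t).
    { unfold tau. rewrite (sum_single _ 0 nL u); [|intros k Hk; rewrite Hsupp; auto; lra|lia].
      rewrite Hbu, HQu. fold t; lra. }
    split; [repeat split|].
    + apply ib_nonneg.
    + apply ib_out.
    + rewrite (sum_single _ 0 nL u); auto; lia.
    + exists (u :: nil). split; [left; exists u; auto|]. intros k Hk. left. apply NNPP; intros Hn; apply Hk, Hsupp; auto.
    + exists u. split; auto. split; [rewrite Hbu; lra|]. rewrite Htau, HQu. split; [fold t; lra|].
      apply trunc_id. fold t; lra.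
  -
    assert (Ht0 : 0 < t).
    { destruct (Req_dec t 0) as [E|E]; [exfalso; apply Hno; exists 0%nat; split; [lia|rewrite Rk_0; auto]|lra]. }
    destruct (first_step (fun k => t <= Rk k) m) as [j [Hj1 Hj2]]; [rewrite Rk_0; lra|lra|].
    apply Rnot_le_lt in Hj1.
    assert (Hjm : (j < m)%nat) by (apply Rk_lt_inv; lra).
    assert (Hj3 : t < Rk (S j)).
    { destruct Hj2 as [Hlt|Heq]; auto. exfalso; apply Hno; exists (S j); split; auto. }
    destruct (vert_exists (xm x) j) as [P [HP HagP]].
    { intros i Hi. pose proof (Rk_lt i j Hi); fold t; lra. }
    destruct (vert_exists (xm x) (S j)) as [Q [HQ HagQ]].
    { intros i Hi. pose proof (Rk_le i j ltac:(lia)); fold t; lra. }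
    assert (HinP : In (j, P) L) by (apply HL2; auto; lia).
    assert (HinQ : In (S j, Q) L) by (apply HL2; auto; lia).
    destruct (idx_spec _ HinP) as [Ha Hva]. destruct (idx_spec _ HinQ) as [Hc Hvc].
    set (a := idx (j, P)) in *. set (c := idx (S j, Q)) in *.
    assert (Hac : a <> c) by (intros E; rewrite E in Hva; rewrite Hva in Hvc; injection Hvc; lia).
    assert (Hsupp : forall k, k <> a -> k <> c -> ib x k = 0).
    { intros k Hka Hkc. apply NNPP; intros Hnz.
      destruct (ib_nz_vertex x k Hnz) as [l [Q' [-> [HQ' [Hag [Hh Hl]]]]]].
      assert (l = j \/ l = S j) as [->| ->].
      { destruct (Nat.lt_trichotomy l j) as [Hlt|[Heq|Hgt]]; auto.
        - exfalso; apply Hh. apply hat_zero_hi. pose proof (Rk_le (S l) j ltac:(lia)); fold t; lra.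
        - destruct (Nat.eq_dec l (S j)); auto. exfalso; apply Hh. apply hat_zero_lo.
          destruct l as [|l]; [lia|]. rewrite lo_S. pose proof (Rk_le (S j) l ltac:(lia)); fold t; lra. }
      - exfalso; apply Hka. unfold a. f_equal. f_equal. apply vert_unique with j; auto.
        apply agree_trans with (xm x); apply agree_sym; assumption.
      - exfalso; apply Hkc. unfold c. f_equal. f_equal. apply vert_unique with (S j); auto.
        apply agree_trans with (xm x); apply agree_sym; assumption. }
    assert (Hba : ib x a = hat j t) by (unfold a; apply ib_at; auto; apply agree_sym; auto).
    assert (Hbc : ib x c = hat (S j) t) by (unfold c; apply ib_at; auto; apply agree_sym; auto).
    assert (HQa : Qv a = P) by (unfold Qv; rewrite Hva; reflexivity).
    assert (HQc : Qv c = Q) by (unfold Qv; rewrite Hvc; reflexivity).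
    assert (Hla : lv a = j) by (unfold lv; rewrite Hva; reflexivity).
    assert (Hlc : lv c = S j) by (unfold lv; rewrite Hvc; reflexivity).
    assert (Hrange : Rk j <= t <= Rk (S j)) by lra.
    assert (Htau : tau (ib x) = t).
    { unfold tau. rewrite (sum_two _ 0 nL a c); auto; try lia.
      - rewrite Hba, Hbc, HQa, HQc. unfold isV in HP, HQ. rewrite HP, HQ. apply hat_interp; auto.
      - intros k Hk1 Hk2. rewrite Hsupp; auto; lra. }
    split; [repeat split|].
    + apply ib_nonneg.
    + apply ib_out.
    + rewrite (sum_two _ 0 nL a c); auto; try lia. rewrite Hba, Hbc. apply hat_sum; auto.
    + exists (a :: c :: nil). split.
      * right. exists a, c. split; [|left; auto]. repeat split; auto.
        -- rewrite Hla, Hlc; auto.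
        -- rewrite Hla, HQa, HQc. apply agree_trans with (xm x); [apply agree_le with (S j); auto|apply agree_sym; auto].
      * intros k Hk. destruct (Nat.eq_dec k a); [left; auto|]. destruct (Nat.eq_dec k c); [right; left; auto|].
        exfalso; apply Hk, Hsupp; auto.
    + exists c. split; auto. split; [rewrite Hbc; pose proof (hat_pos_S j t ltac:(lra)); lra|].
      rewrite Htau, HQc. split; [unfold isV in HQ; rewrite HQ; lra|].
      symmetry. fold t. unfold t at 1. apply trunc_char.
      * intros i Hi. destruct (le_lt_dec i (S j)) as [Hle|Hlt]; [apply agree_sym in HagQ; apply HagQ; auto|].
        exfalso. destruct i as [|i]; [lia|]. apply Hi. apply g_None. fold t. pose proof (Rk_le (S j) i ltac:(lia)); lra.
      * unfold isV in HQ; rewrite HQ; fold t; lra.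
Qed.

Definition sel (b : nat -> R) : list nat :=
  epsilon (inhabits nil) (fun s => simp s /\ forall j, b j <> 0 -> In j s).
Definition deep (s : list nat) : nat :=
  match s with a :: c :: _ => if lt_dec (lv a) (lv c) then c else a | a :: nil => a | nil => 0%nat end.
Definition pmap (b : nat -> R) : T := trunc (Qv (deep (sel b))) (tau b).

Lemma sel_spec b : in_realization nL simp b -> simp (sel b) /\ forall j, b j <> 0 -> In j (sel b).
Proof. intros [_ [_ [_ H]]]. unfold sel. apply epsilon_spec; auto. Qed.

Lemma deep_trunc s u : simp s -> In u s -> Qv u = trunc (Qv (deep s)) (tt (Qv u)).
Proof.
  intros Hs Hu. destruct Hs as [[a [Ha ->]]|[a [c [[Ha [Hc [Hl Hag]]] Hs]]]].
  - destruct Hu as [<-|[]]. simpl. symmetry; apply trunc_id; lra.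
  - assert (Hd : deep s = c).
    { destruct Hs as [-> | ->]; simpl; destruct lt_dec; auto; lia. }
    rewrite Hd.
    assert (Hu' : u = a \/ u = c) by (destruct Hs as [-> | ->]; simpl in Hu; intuition).
    destruct Hu' as [-> | ->].
    + destruct (vx_isV a Ha) as [HVa _]. destruct (vx_isV c Hc) as [HVc _].
      apply trunc_char.
      * intros i Hi. apply (isV_g _ _ i HVa) in Hi. symmetry; apply Hag; auto.
      * unfold isV in *. rewrite HVa, HVc, Hl. apply Rk_le; lia.
    + symmetry; apply trunc_id; lra.
Qed.

Lemma tau_nonneg b : (forall k, 0 <= b k) -> 0 <= tau b.
Proof.
  intros H. apply sum_nonneg. intros k. apply Rmult_le_pos; auto. apply tt_bounds.
Qed.

Lemma pmap_eq b u : in_realization nL simp b -> b u <> 0 -> tau b <= tt (Qv u) ->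
  pmap b = trunc (Qv u) (tau b).
Proof.
  intros Hb Hbu Ht. destruct (sel_spec b Hb) as [Hs Hin].
  unfold pmap. rewrite (deep_trunc (sel b) u Hs (Hin u Hbu)).
  rewrite trunc_trunc; auto. split; auto. apply tau_nonneg. apply Hb.
Qed.

Lemma tau_le b M : (forall k, b k <> 0 -> tt (Qv k) <= M) -> (forall k, 0 <= b k) ->
  sumR (map b (seq 0 nL)) = 1 -> tau b <= M.
Proof.
  intros H1 H2 H3. unfold tau. apply Rle_trans with (sumR (map (fun k => b k * M) (seq 0 nL))).
  - apply sum_le. intros k _. destruct (Req_dec (b k) 0) as [E|E].
    + rewrite E; lra.
    + apply Rmult_le_compat_l; auto.
  - rewrite sum_scal, H3; lra.
Qed.

Lemma pmap_exists b : in_realization nL simp b ->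
  exists u, (u < nL)%nat /\ b u <> 0 /\ tau b <= tt (Qv u).
Proof.
  intros Hb. pose proof Hb as [Hpos [_ [Hsum _]]]. destruct (sel_spec b Hb) as [Hs Hin].
  destruct (sum_pos_ex b 0 nL) as [k0 [_ Hk0]]; [lra|].
  destruct Hs as [[a [Ha Hsa]]|[a [c [[Ha [Hc [Hl Hag]]] Hs]]]].
  - assert (Hsup : forall k, b k <> 0 -> k = a).
    { intros k Hk. pose proof (Hin k Hk) as H. rewrite Hsa in H. destruct H as [<-|[]]; auto. }
    exists a. split; auto. split; [rewrite <- (Hsup k0 Hk0); auto|].
    apply tau_le; auto. intros k Hk. rewrite (Hsup k Hk); lra.
  - assert (Hsup : forall k, b k <> 0 -> k = a \/ k = c).
    { intros k Hk. pose proof (Hin k Hk) as H. destruct Hs as [E|E]; rewrite E in H; simpl in H; intuition. }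
    destruct (vx_isV a Ha) as [HVa _]. destruct (vx_isV c Hc) as [HVc _].
    assert (Hac : tt (Qv a) <= tt (Qv c)) by (unfold isV in *; rewrite HVa, HVc, Hl; apply Rk_le; lia).
    destruct (Req_dec (b c) 0) as [Ec|Ec].
    + exists a. split; auto. split.
      * destruct (Hsup k0 Hk0) as [<-|<-]; auto; contradiction.
      * apply tau_le; auto. intros k Hk. destruct (Hsup k Hk) as [->| ->]; [lra|contradiction].
    + exists c. split; auto. split; auto. apply tau_le; auto.
      intros k Hk. destruct (Hsup k Hk) as [->| ->]; lra.
Qed.

Lemma tau_lip b b' : Rabs (tau b - tau b') <= real_dist nL b b'.
Proof.
  unfold tau, real_dist. eapply Rle_trans; [apply sum_abs_diff|]. apply sum_le. intros k _.
  replace (b k * tt (Qv k) - b' k * tt (Qv k)) with ((b k - b' k) * tt (Qv k)) by ring.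
  rewrite Rabs_mult. pose proof (tt_bounds (Qv k)). rewrite (Rabs_pos_eq (tt (Qv k))) by lra.
  pose proof (Rabs_pos (b k - b' k)).
  replace (Rabs (b k - b' k)) with (Rabs (b k - b' k) * 1) at 2 by ring.
  apply Rmult_le_compat_l; lra.
Qed.

Lemma pmap_cont : cont_on (real_dist nL) (in_realization nL simp) dT pmap.
Proof.
  intros b Hb e He. destruct (pmap_exists b Hb) as [u [Hu [Hbu Htu]]].
  assert (Hbu' : 0 < b u) by (destruct Hb as [Hpos _]; pose proof (Hpos u); lra).
  exists (Rmin (b u) e). split; [apply Rmin_pos; auto|].
  intros b' Hb' Hd.
  assert (Hd1 : Rabs (b u - b' u) <= real_dist nL b b').
  { unfold real_dist. apply (term_le_sum (fun j => Rabs (b j - b' j)) 0 nL u); [intros; apply Rabs_pos|lia]. }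
  pose proof (Rmin_l (b u) e). pose proof (Rmin_r (b u) e).
  assert (Hb'u : b' u <> 0).
  { intros E. rewrite E, Rminus_0_r, Rabs_pos_eq in Hd1 by lra. lra. }
  destruct (sel_spec b' Hb') as [Hs' Hin'].
  rewrite (pmap_eq b u Hb Hbu Htu).
  rewrite (deep_trunc (sel b') u Hs' (Hin' u Hb'u)).
  rewrite trunc_trunc by (split; auto; apply tau_nonneg; apply Hb).
  unfold pmap. eapply Rle_lt_trans; [apply dist_trunc_same|].
  eapply Rle_lt_trans; [apply tau_lip|]. lra.
Qed.

Definition Cst : R := 2 ^ (S m).

Lemma sl_bounds j : (j <= m)%nat -> sl_l j <= Cst /\ sl_r j <= Cst.
Proof.
  intros Hj. unfold Cst. split.
  - destruct j as [|j].
    + change (sl_l 0) with (2^0). apply Rle_pow; [lra|lia].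
    + change (sl_l (S j)) with (2^(S j)). apply Rle_pow; [lra|lia].
  - unfold sl_r. apply Rle_pow; [lra|lia].
Qed.

Lemma Cst_pos : 0 < Cst.
Proof. apply pow_lt; lra. Qed.

Lemma xm_lip x y : dT (xm x) (xm y) <= dT x y.
Proof. apply dist_trunc_lip. apply Rk_ge0. Qed.

Lemma half_case x y k : Pk k x -> ~ Pk k y -> hat (lv k) (tt (xm x)) <= Cst * dT x y.
Proof.
  intros [Hk [Hi Hag]] Hn.
  assert (Hn' : ~ agree (xm y) (Qv k) (lv k)) by (intros H; apply Hn; repeat split; auto).
  unfold agree in Hn'. apply not_all_ex_not in Hn' as [i Hi'].
  apply imply_to_and in Hi' as [Hil Hneq].
  destruct i as [|i]; [exfalso; apply Hneq; now rewrite !g_0|].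
  assert (HA : A (xm x) (xm y) <= Rk i).
  { apply A_diff. rewrite (Hag (S i) Hil). intros E; apply Hneq; auto. }
  destruct (vx_isV k Hk) as [_ Hkm]. destruct (sl_bounds _ Hkm) as [Hc _].
  eapply Rle_trans; [|apply Rmult_le_compat_l; [left; apply Cst_pos|apply xm_lip]].
  apply hat_le_lo; auto; [apply dist_nonneg|].
  destruct (lv k) as [|l] eqn:El; [lia|]. rewrite lo_S.
  pose proof (Rk_le i l ltac:(lia)). rewrite dist_eq.
  pose proof (Rmin_l (Rmin (tt (xm x)) (tt (xm y))) (A (xm x) (xm y))).
  pose proof (Rmin_r (Rmin (tt (xm x)) (tt (xm y))) (A (xm x) (xm y))).
  pose proof (Rmin_r (tt (xm x)) (tt (xm y))). lra.
Qed.

Lemma ib_lip x y k : Rabs (ib x k - ib y k) <= Cst * dT x y.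
Proof.
  pose proof Cst_pos. pose proof (dist_nonneg x y).
  unfold ib. destruct (excluded_middle_informative (Pk k x)) as [Hx|Hx];
  destruct (excluded_middle_informative (Pk k y)) as [Hy|Hy].
  - destruct Hx as [Hk _]. destruct (vx_isV k Hk) as [_ Hkm]. destruct (sl_bounds _ Hkm) as [H1 H2].
    eapply Rle_trans; [apply hat_lip; eauto|]. apply Rmult_le_compat_l; [lra|].
    eapply Rle_trans; [apply tt_lip|apply xm_lip].
  - rewrite Rminus_0_r, Rabs_pos_eq by apply hat_nonneg. apply half_case; auto.
  - rewrite Rminus_0_l, Rabs_Ropp, Rabs_pos_eq by apply hat_nonneg. rewrite dist_sym. apply half_case; auto.
  - rewrite Rminus_0_r, Rabs_R0. apply Rmult_le_pos; lra.
Qed.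

Lemma ib_cont : cont_on dT (fun _ => True) (real_dist nL) ib.
Proof.
  intros x _ e He. pose proof Cst_pos. pose proof (pos_INR nL).
  exists (e / (INR nL * Cst + 1)). split; [apply Rdiv_lt_0_compat; nra|].
  intros y _ Hd. unfold real_dist.
  eapply Rle_lt_trans; [apply sum_const_le; intros k; apply ib_lip|].
  assert (Hd' : dT x y * (INR nL * Cst + 1) < e).
  { apply Rmult_lt_compat_r with (r := INR nL * Cst + 1) in Hd; [|nra].
    unfold Rdiv in Hd. rewrite Rmult_assoc, Rinv_l, Rmult_1_r in Hd; nra. }
  pose proof (dist_nonneg x y). nra.
Qed.

Definition rr (s : R) : R := Rk m + Rmax 0 (Rmin s 1) * (1/2)^m.

Lemma rr_lip s s' : Rabs (rr s - rr s') <= (1/2)^m * Rabs (s - s').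
Proof.
  unfold rr. replace (Rk m + Rmax 0 (Rmin s 1) * (1 / 2) ^ m - (Rk m + Rmax 0 (Rmin s' 1) * (1 / 2) ^ m))
    with ((Rmax 0 (Rmin s 1) - Rmax 0 (Rmin s' 1)) * (1/2)^m) by ring.
  rewrite Rabs_mult, (Rabs_pos_eq ((1/2)^m)) by (left; apply hp_pos). rewrite Rmult_comm.
  apply Rmult_le_compat_l; [left; apply hp_pos|].
  unfold Rmax, Rmin, Rabs; repeat destruct Rle_dec; repeat destruct Rcase_abs; lra.
Qed.

Lemma transfer_data delta : (1/2)^m <= delta ->
    exists (n : nat) (simp : list nat -> Prop),
      simplicial_complex_dim_le n simp 1 /\
      exists (i : T -> (nat -> R)) (p : (nat -> R) -> T) (H : R -> T -> T),
        (forall x, in_realization n simp (i x)) /\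
        cont_on dT (fun _ => True) (real_dist n) i /\
        cont_on (real_dist n) (in_realization n simp) dT p /\
        homotopy_cont dT dT H /\
        (forall x, H 0 x = p (i x)) /\
        (forall x, H 1 x = x) /\
        (forall x s s', 0 <= s <= 1 -> 0 <= s' <= 1 ->
           dT (H s x) (H s' x) <= delta).
Proof.
  intros Hdel. exists nL, simp. split; [apply simp_complex|].
  exists ib, pmap, (fun s x => trunc x (rr s)).
  split; [intros x; apply (i_facts x)|].
  split; [apply ib_cont|]. split; [apply pmap_cont|].
  split; [|split; [|split]].
  - apply hom_cont with ((1/2)^m); [left; apply hp_pos| |apply rr_lip].
    intros s _. unfold rr. pose proof (Rk_ge0 m). pose proof (hp_pos m).
    assert (0 <= Rmax 0 (Rmin s 1)) by apply Rmax_l. nra.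
  - intros x. destruct (i_facts x) as [Hr [u [Hu [Hbu [Ht Heq]]]]].
    rewrite (pmap_eq _ u Hr Hbu Ht), Heq. unfold xm, rr. f_equal.
    rewrite Rmin_left, Rmax_left by lra. ring.
  - intros x. unfold rr. rewrite Rmin_left, Rmax_right by lra. apply trunc_id.
    unfold Rk. pose proof (tt_bounds x). lra.
  - intros x s s' Hs Hs'. eapply Rle_trans; [apply dist_trunc_same|].
    eapply Rle_trans; [apply rr_lip|]. pose proof (hp_pos m).
    assert (Rabs (s - s') <= 1) by (unfold Rabs; destruct Rcase_abs; lra).
    apply Rle_trans with ((1/2)^m * 1); [apply Rmult_le_compat_l; lra|lra].
Qed.

End Transfer.

End Main.

Theorem mainTheorem1 (V : Type) (adj : V -> V -> Prop) (x0 : V) :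
  simplicial_tree adj -> locally_finite adj ->
  transfer_space (Tbar_dist adj x0) 1.
Proof.
  intros _ LF. split; [apply is_metric_T|]. split; [apply compact_T; auto|].
  split; [apply contractible_T|].
  intros delta Hdel. destruct (hp_small delta Hdel) as [m Hm].
  destruct (upto_finite V adj x0 LF m) as [L [HL1 HL2]].
  apply (transfer_data V adj x0 m L HL1 HL2). lra.
Qed.
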